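(* Let $X$ be a real or complex Banach space, $(A(n))_{n\in\mathbb{N}}$ a sequence in $\mathcal{B}(X)$, and $P:\mathbb{N}\to\mathcal{B}(X)$ a family of projections compatible with the system $x_{n+1}=A(n)x_n$, with complementary family $Q(n)=I-P(n)$. Then the system is $P$-nonuniformly exponentially dichotomic if and only if there exist a constant $d>0$ and a sequence of real numbers $S:\mathbb{N}\to(0,\infty)$ such that \[ \sum_{j=n}^{\infty}e^{d(j-n)}\|\mathcal{A}_P(j,p)x\|+\sum_{k=n}^{m}e^{d(m-k)}\|\mathcal{A}_Q(k,n)x\|\le S(n)\|\mathcal{A}_P(n,p)x\|+S(m)\|\mathcal{A}_Q(m,n)x\| \] for all $(m,n,p)\in T$ and all $x\in X$.
   Context: $\mathbb{N}$ denotes the set of positive integers; $\mathcal{B}(X)$ is the Banach algebra of bounded linear operators on $X$, and $I$ is the identity operator. $\Delta=\{(m,n)\in\mathbb{N}^2: m\ge n\}$ and $T=\{(m,n,p)\in\mathbb{N}^3: m\ge n\ge p\}$. A family of projections is a map $P:\mathbb{N}\to\mathcal{B}(X)$ with $P(n)^2=P(n)$ for all $n$; its complementary family is $Q(n)=I-P(n)$. $P$ is compatible with the system $x_{n+1}=A(n)x_n$ if $A(n+1)P(n)=P(n+1)A(n+1)$ for all $n\in\mathbb{N}$. For $(m,n)\in\Delta$ define $\mathcal{A}_P(m,n)=A(m)\cdots A(n+1)P(n)$ if $m>n$ and $\mathcal{A}_P(n,n)=P(n)$; similarly $\mathcal{A}_Q(m,n)=A(m)\cdots A(n+1)Q(n)$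 if $m>n$ and $\mathcal{A}_Q(n,n)=Q(n)$. The system is $P$-nonuniformly exponentially dichotomic if there exist a constant $\alpha>0$ and a nondecreasing sequence of real numbers $N:\mathbb{N}\to(0,\infty)$ such that $e^{\alpha(m-n)}\big(\|\mathcal{A}_P(m,n)x\|+\|Q(n)x\|\big)\le N(n)\|P(n)x\|+N(m)\|\mathcal{A}_Q(m,n)x\|$ for all $(m,n)\in\Delta$, $x\in X$. *)

(* Defs.v *)
From HB Require Import structures.
From mathcomp Require Import all_boot all_order all_algebra.
From mathcomp Require Import all_classical all_reals all_analysis.
Set Implicit Arguments. Unset Strict Implicit. Unset Printing Implicit Defensive.
Import Order.TTheory GRing.Theory Num.Theory.
Import numFieldNormedType.Exports.
Local Open Scope ring_scope.

Section Defs.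
Variables (R : realType) (X : completeNormedModType R).

(* B(X): bounded (= continuous) linear operators on X *)
Definition bounded_op (f : X -> X) : Prop := linear f /\ continuous f.

Definition compl_fam (P : nat -> X -> X) : nat -> X -> X :=
  fun n x => x - P n x.

Fixpoint evol (A : nat -> X -> X) (n k : nat) (x : X) : X :=
  match k with
  | 0 => x
  | k'.+1 => A (n + k'.+1)%N (evol A n k' x)
  end.

(* cocycle with projection: A(m)...A(n+1)F(n) for m > n, F(n) for m = n *)
Definition calA (A F : nat -> X -> X) (m n : nat) (x : X) : X :=
  evol A n (m - n) (F n x).

(* compatibility, for all n in N = {1,2,...} *)
Definition compatible (A P : nat -> X -> X) : Prop :=
  forall n, (1 <= n)%N -> forall x, A n.+1 (P n x) = P n.+1 (A n.+1 x).

Definition nonunif_exp_dichotomic (A P : nat -> X -> X) : Prop :=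
  exists alpha : R, 0 < alpha /\
  exists N : nat -> R,
    (forall n, (1 <= n)%N -> 0 < N n) /\
    (forall n m, (1 <= n)%N -> (n <= m)%N -> N n <= N m) /\
    (forall m n x, (1 <= n)%N -> (n <= m)%N ->
      expR (alpha * (m - n)%:R) *
        (`|calA A P m n x| + `|compl_fam P n x|)
      <= N n * `|P n x| + N m * `|calA A (compl_fam P) m n x|).
End Defs.

(* Main.v *)
Require Import Defs.
From HB Require Import structures.
From mathcomp Require Import all_boot all_order all_algebra.
From mathcomp Require Import all_classical all_reals all_analysis.
From mathcomp Require Import zify ring.
Import Order.TTheory GRing.Theory Num.Theory.
Import numFieldNormedType.Exports.
Local Open Scope ring_scope.

Fixpoint Nmax {R : realType} (S : nat -> R) (n : nat) : R :=
  match n with 0 => S 0%N | k.+1 => Num.max (Nmax S k) (S k.+1) end.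

Lemma Nmax_ge {R : realType} (S : nat -> R) n : S n <= Nmax S n.
Proof. by case: n => [|n] //=; rewrite le_max lexx orbT. Qed.

Lemma Nmax_mono {R : realType} (S : nat -> R) n m : (n <= m)%N -> Nmax S n <= Nmax S m.
Proof.
elim: m => [|m IH]; first by rewrite leqn0 => /eqP ->.
rewrite leq_eqVlt => /orP [/eqP -> //|]; rewrite ltnS => /IH h.
by apply: le_trans h _ => /=; rewrite le_max lexx.
Qed.

Section Aux.
Variables (R : realType) (X : completeNormedModType R) (A P : nat -> X -> X).
Hypothesis HA : forall n, (1 <= n)%N -> bounded_op (A n).
Hypothesis HP : forall n, (1 <= n)%N -> bounded_op (P n).
Hypothesis Hidem : forall n, (1 <= n)%N -> forall x, P n (P n x) = P n x.
Hypothesis Hcomp : compatible A P.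

Lemma lin0 (f : X -> X) : linear f -> f 0 = 0.
Proof.
move=> lf; have := lf 1 0 0; rewrite !scale1r addr0 => h.
by apply: (addrI (f 0)); rewrite addr0 -h.
Qed.

Lemma linB (f : X -> X) x y : linear f -> f (x - y) = f x - f y.
Proof.
move=> lf; have h := lf (-1) y x; rewrite !scaleN1r in h.
by rewrite [x - y]addrC h addrC.
Qed.

Lemma evol0 n k : evol A n k 0 = 0.
Proof.
elim: k => [|k IH] //=; rewrite IH; apply: lin0; have h : (1 <= n + k.+1)%N by rewrite addnS.
exact: (HA _ h).1.
Qed.

Lemma HAlin m : (1 <= m)%N -> linear (A m).
Proof. by move=> h; exact: (HA _ h).1. Qed.

Lemma HPlin m : (1 <= m)%N -> linear (P m).
Proof. by move=> h; exact: (HP _ h).1. Qed.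

Lemma evolB n k x y : evol A n k (x - y) = evol A n k x - evol A n k y.
Proof.
elim: k => [|k IH] //=; rewrite IH linB //; apply: HAlin; by rewrite addnS.
Qed.

Lemma evol_add n k j x : evol A n (k + j) x = evol A (n + k) j (evol A n k x).
Proof.
elim: j => [|j IH] /=; first by rewrite addn0.
by rewrite addnS /= IH; congr A; lia.
Qed.

Lemma evol_comp n k x : (1 <= n)%N ->
  evol A n k (P n x) = P (n + k)%N (evol A n k x).
Proof.
move=> n1; elim: k => [|k IH] /=; first by rewrite addn0.
rewrite IH addnS Hcomp //; exact: leq_trans n1 (leq_addr _ _).
Qed.

Lemma Py_fix n p x : (1 <= p)%N -> (p <= n)%N ->
  P n (calA A P n p x) = calA A P n p x.
Proof.
move=> p1 pn; rewrite /calA evol_comp // subnKC // Hidem //.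
exact: leq_trans p1 pn.
Qed.

Lemma calA_P_shift j n p x : (1 <= p)%N -> (p <= n)%N -> (n <= j)%N ->
  calA A P j n (calA A P n p x) = calA A P j p x.
Proof.
move=> p1 pn nj; rewrite {1}/calA Py_fix // /calA -[X in evol A X](subnKC pn).
by rewrite -evol_add; congr evol; lia.
Qed.

Lemma Qy0 n p x : (1 <= p)%N -> (p <= n)%N ->
  compl_fam P n (calA A P n p x) = 0.
Proof. by move=> p1 pn; rewrite /compl_fam Py_fix // subrr. Qed.

Lemma calA_Q_y j n p x : (1 <= p)%N -> (p <= n)%N ->
  calA A (compl_fam P) j n (calA A P n p x) = 0.
Proof. by move=> p1 pn; rewrite /calA Qy0 // evol0. Qed.

Lemma Pw0 k n x : (1 <= n)%N -> (n <= k)%N ->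
  P k (calA A (compl_fam P) k n x) = 0.
Proof.
move=> n1 nk; rewrite /calA /compl_fam -[X in P X](subnKC nk) -evol_comp //.
rewrite linB; last exact: HPlin.
by rewrite Hidem // subrr evol0.
Qed.

Lemma calA_P_w m k n x : (1 <= n)%N -> (n <= k)%N ->
  calA A P m k (calA A (compl_fam P) k n x) = 0.
Proof. by move=> n1 nk; rewrite /calA Pw0 // evol0. Qed.

Lemma Qw k n x : (1 <= n)%N -> (n <= k)%N ->
  compl_fam P k (calA A (compl_fam P) k n x) = calA A (compl_fam P) k n x.
Proof. by move=> n1 nk; rewrite /compl_fam Pw0 // subr0. Qed.

Lemma calA_Q_w m k n x : (1 <= n)%N -> (n <= k)%N -> (k <= m)%N ->
  calA A (compl_fam P) m k (calA A (compl_fam P) k n x) = calA A (compl_fam P) m n x.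
Proof.
move=> n1 nk km; rewrite {1}/calA Qw // /calA -[X in evol A X _ _](subnKC nk).
by rewrite -evol_add; congr evol; lia.
Qed.


Lemma geo_le (q : R) n K : 0 < q -> q < 1 ->
  \sum_(n <= j < K) q ^+ (j - n) <= (1 - q)^-1.
Proof.
move=> q0 q1; have C0 : 0 < (1 - q)^-1 by rewrite invr_gt0 subr_gt0.
case: (leqP n K) => nK; last by rewrite big_geq ?(ltnW nK) // ltW.
rewrite -{1}(add0n n) big_addn.
have -> : \sum_(0 <= i < (K - n)%N) q ^+ (i + n - n)%N = series (geometric 1 q) (K - n)%N.
  by rewrite /series /=; apply: eq_bigr => i _; rewrite addnK /geometric /= mul1r.
have := geometric_le_lim (K - n)%N (@ler01 R) q0.
by rewrite ger0_norm ?(ltW q0) // mul1r => /(_ q1).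
Qed.

Lemma eser_le (u : nat -> R) n c : (forall j, 0 <= u j) ->
  (forall K, \sum_(n <= j < K) u j <= c) ->
  (\sum_(n <= j <oo) (u j)%:E <= c%:E)%E.
Proof.
move=> u0 uc; apply: lime_le.
  by apply: is_cvg_nneseries => j _ _; rewrite lee_fin.
apply: nearW => K.
by rewrite sumEFin lee_fin.
Qed.

Lemma calA_nn (F : nat -> X -> X) n x : calA A F n n x = F n x.
Proof. by rewrite /calA subnn. Qed.

Lemma back_dir :
  (exists d : R, 0 < d /\
  exists S : nat -> R,
    (forall n, (1 <= n)%N -> 0 < S n) /\
    (forall m n p x, (1 <= p)%N -> (p <= n)%N -> (n <= m)%N ->
      ((\sum_(n <= j <oo) (expR (d * (j - n)%:R) * `|calA A P j p x|)%:E) +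
       (\sum_(n <= k < m.+1) expR (d * (m - k)%:R)
                              * `|calA A (compl_fam P) k n x|)%:E
       <= (S n * `|calA A P n p x| + S m * `|calA A (compl_fam P) m n x|)%:E)%E)) ->
  nonunif_exp_dichotomic A P.
Proof.
move=> [d [d0 [S [S0 H]]]].
exists d; split => //; exists (Nmax S); split.
  by move=> n n1; apply: lt_le_trans (S0 _ n1) (Nmax_ge S n).
split; first by move=> n m _; exact: Nmax_mono.
move=> m n x n1 nm.
have := H m n n x n1 (leqnn n) nm.
rewrite calA_nn.
set Ser := (\sum_(n <= j <oo) _)%E.
set sq := \sum_(n <= k < m.+1) _.
move=> Hle.
have hs : ((expR (d * (m - n)%:R) * `|calA A P m n x|)%:E <= Ser)%E.
  apply: le_trans (nneseries_lim_ge m.+1 _); last first.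
    by move=> j _ _; rewrite lee_fin mulr_ge0 // expR_ge0.
  rewrite sumEFin lee_fin big_nat_recr //=; rewrite lerDr.
  by apply: sumr_ge0 => j _; rewrite mulr_ge0 // expR_ge0.
have hq : expR (d * (m - n)%:R) * `|compl_fam P n x| <= sq.
  rewrite /sq big_ltn ?ltnS // calA_nn lerDl.
  by apply: sumr_ge0 => j _; rewrite mulr_ge0 // expR_ge0.
have : ((expR (d * (m - n)%:R) * `|calA A P m n x|) +
        (expR (d * (m - n)%:R) * `|compl_fam P n x|) <=
      S n * `|P n x| + S m * `|calA A (compl_fam P) m n x|).
  rewrite -lee_fin; apply: le_trans Hle; rewrite EFinD; apply: leeD => //.
rewrite -mulrDr => h; apply: le_trans h _.
by apply: lerD; apply: ler_wpM2r => //; exact: Nmax_ge.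
Qed.

Lemma exp_manip (al d t v B : R) : al = d + d ->
  expR (al * t) * v <= B -> 0 <= v ->
  expR (d * t) * v <= B * expR (- d * t).
Proof.
move=> ald h v0.
have -> : expR (d * t) = expR (- d * t) * expR (al * t).
  by rewrite -expRD ald; congr expR; ring.
by rewrite -mulrA mulrC ler_wpM2r // expR_ge0.
Qed.

Lemma fwd_dir : nonunif_exp_dichotomic A P ->
  (exists d : R, 0 < d /\
  exists S : nat -> R,
    (forall n, (1 <= n)%N -> 0 < S n) /\
    (forall m n p x, (1 <= p)%N -> (p <= n)%N -> (n <= m)%N ->
      ((\sum_(n <= j <oo) (expR (d * (j - n)%:R) * `|calA A P j p x|)%:E) +
       (\sum_(n <= k < m.+1) expR (d * (m - k)%:R)
                              * `|calA A (compl_fam P) k n x|)%:E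
       <= (S n * `|calA A P n p x| + S m * `|calA A (compl_fam P) m n x|)%:E)%E)).
Proof.
move=> [al [al0 [N [N0 [Nmono H]]]]].
set d := al / 2.
have d0 : 0 < d by rewrite divr_gt0.
have ald : al = d + d by rewrite /d -splitr.
set q := expR (- d).
have q0 : 0 < q by rewrite expR_gt0.
have q1 : q < 1 by rewrite expR_lt1 oppr_lt0.
set C := (1 - q)^-1.
have C0 : 0 < C by rewrite invr_gt0 subr_gt0.
exists d; split => //; exists (fun n => N n * C); split.
  by move=> n n1; rewrite mulr_gt0 // N0.
move=> m n p x p1 pn nm.
have n1 : (1 <= n)%N by exact: leq_trans p1 pn.
have m1 : (1 <= m)%N by exact: leq_trans n1 nm.
set y := calA A P n p x.
set z := calA A (compl_fam P) m n x.
have tP j : (n <= j)%N -> expR (d * (j - n)%:R) * `|calA A P j p x| <=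
    N n * `|y| * q ^+ (j - n).
  move=> nj; have := H j n y n1 nj.
  rewrite calA_P_shift // Qy0 // calA_Q_y // Py_fix // !normr0 mulr0 !addr0.
  move/exp_manip => /(_ d ald (normr_ge0 _)).
  by rewrite /q -expRM_natr mulNr.
have tQ k : (n <= k <= m)%N -> expR (d * (m - k)%:R) * `|calA A (compl_fam P) k n x| <=
    N m * `|z| * q ^+ (m - k).
  move=> /andP [nk km]; have k1 : (1 <= k)%N by exact: leq_trans n1 nk.
  have := H m k (calA A (compl_fam P) k n x) k1 km.
  rewrite calA_P_w // Qw // Pw0 // calA_Q_w // !normr0 mulr0 !add0r.
  move/exp_manip => /(_ d ald (normr_ge0 _)).
  by rewrite /q -expRM_natr mulNr.
rewrite EFinD; apply: leeD.
  apply: eser_le => [j|K].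
    by rewrite mulr_ge0 // expR_ge0.
  apply: le_trans (_ : \sum_(n <= j < K) (N n * `|y| * q ^+ (j - n)) <= _).
    by apply: ler_sum_nat => j /andP [nj _]; exact: tP.
  rewrite -mulr_sumr [X in _ <= X]mulrAC ler_wpM2l ?mulr_ge0 ?normr_ge0 ?(ltW (N0 _ n1)) //.
  exact: geo_le.
rewrite lee_fin.
apply: le_trans (_ : \sum_(n <= k < m.+1) (N m * `|z| * q ^+ (m - k)) <= _).
  by apply: ler_sum_nat => k /andP [nk km]; apply: tQ; rewrite nk -ltnS km.
rewrite -mulr_sumr [X in _ <= X]mulrAC ler_wpM2l ?mulr_ge0 ?normr_ge0 ?(ltW (N0 _ m1)) //.
have -> : \sum_(n <= k < m.+1) q ^+ (m - k) = \sum_(n <= k < m.+1) q ^+ (k - n).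
  rewrite big_nat_rev; apply: eq_big_nat => k /andP [nk km].
  by congr (q ^+ _); lia.
exact: geo_le.
Qed.

End Aux.

Theorem mainTheorem1 (R : realType) (X : completeNormedModType R)
  (A P : nat -> X -> X) :
  (forall n, (1 <= n)%N -> bounded_op (A n)) ->
  (forall n, (1 <= n)%N -> bounded_op (P n)) ->
  (forall n, (1 <= n)%N -> forall x, P n (P n x) = P n x) ->
  compatible A P ->
  nonunif_exp_dichotomic A P <->
  exists d : R, 0 < d /\
  exists S : nat -> R,
    (forall n, (1 <= n)%N -> 0 < S n) /\
    (forall m n p x, (1 <= p)%N -> (p <= n)%N -> (n <= m)%N ->
      ((\sum_(n <= j <oo) (expR (d * (j - n)%:R) * `|calA A P j p x|)%:E) +
       (\sum_(n <= k < m.+1) expR (d * (m - k)%:R)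
                              * `|calA A (compl_fam P) k n x|)%:E
       <= (S n * `|calA A P n p x| + S m * `|calA A (compl_fam P) m n x|)%:E)%E).
Proof.
move=> HA HP Hid Hc; split; [apply: fwd_dir|apply: back_dir] => //.
Qed.
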